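(* Let $A$ be a non-empty set and $N$ a submagma of the free magma $\mathbb{M}_A$. Then $N$ is closed if and only if $\mathcal{G}(N)\subseteq A$. In particular, the closed submagmas of $\mathbb{M}_A$ are exactly the submagmas $\mathbb{M}_B=\langle B\rangle$ with $B\subseteq A$.
   Context: $\mathbb{M}_A$ is the free magma on $A$ (non-associative words over $A$, with $x+y=(x,y)$); for $B\subseteq A$, $\mathbb{M}_B=\langle B\rangle$ is the submagma generated by $B$ (empty if $B=\emptyset$). A subset $X$ of a magma $M$ is closed if $x+y\in X$ implies $x,y\in X$. For a submagma $N\subseteq\mathbb{M}_A$, $\mathcal{G}(N)$ is the unique minimal generating set of $N$, namely the set of elements of $N$ that cannot be written as $x+y$ with $x,y\in N$ ($\mathcal{G}(\emptyset)=\emptyset$). *)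

(* Defs.v *)
Inductive mag (A : Type) : Type :=
| leaf : A -> mag A
| node : mag A -> mag A -> mag A.
Arguments leaf {A} _.
Arguments node {A} _ _.

Definition is_submagma {A : Type} (N : mag A -> Prop) : Prop :=
  forall x y, N x -> N y -> N (node x y).

Definition closed_set {A : Type} (X : mag A -> Prop) : Prop :=
  forall x y, X (node x y) -> X x /\ X y.

Definition min_gen {A : Type} (N : mag A -> Prop) : mag A -> Prop :=
  fun z => N z /\ ~ (exists x y, N x /\ N y /\ z = node x y).

Inductive gen_by {A : Type} (B : A -> Prop) : mag A -> Prop :=
| gen_leaf : forall a, B a -> gen_by B (leaf a)
| gen_node : forall x y, gen_by B x -> gen_by B y -> gen_by B (node x y).

(* Main.v *)
Require Import Defs.
From Stdlib Require Import Classical.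

Theorem lemma6p2 (A : Type) (Ane : inhabited A) (N : mag A -> Prop)
  (HN : is_submagma N) :
  (closed_set N <-> (forall z, min_gen N z -> exists a : A, z = leaf a))
  /\ (closed_set N <-> exists B : A -> Prop, forall z, N z <-> gen_by B z).
Proof.
  split; split.
  - intros Hc z [Hz Hn]. destruct z as [a|x y].
    + exists a; reflexivity.
    + exfalso. apply Hn. destruct (Hc x y Hz). exists x, y; auto.
  - intros Hg x y Hxy.
    destruct (classic (exists x' y', N x' /\ N y' /\ node x y = node x' y'))
      as [[x' [y' [H1 [H2 H3]]]]|Hn].
    + injection H3 as -> ->. auto.
    + destruct (Hg (node x y) (conj Hxy Hn)) as [a Ha]. discriminate.
  - intros Hc. exists (fun a => N (leaf a)). intro z.
    induction z as [a|x IHx y IHy]; split.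
    + intro H; constructor; exact H.
    + intro H; inversion H; assumption.
    + intro H. destruct (Hc x y H). constructor; tauto.
    + intro H. inversion H; subst. apply HN; tauto.
  - intros [B HB] x y H. rewrite HB in H. inversion H; subst.
    rewrite !HB; auto.
Qed.
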